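(* Let $G_s$ be a selection-augmented causal DAG with treatment $X$, outcome $Y$ and selection node $S$. If $P(Y^*_{X^*})$ is naturally experimental s-recoverable in $G_s$, then $G_s$ contains no direct path (edge $Y\to S$) and no indirect path (directed path from $Y$ to $S$ through intermediate nodes) between $Y$ and $S$.
   Context: Selection-augmented graph: $G_s$ is a causal DAG over observed variables $V$ (including $X$ and $Y$) with an additional binary selection node $S$ ($S=1$ means included in the sample), with edges into $S$ from the variables influencing inclusion; each endogenous node has its own exogenous variable. Twin network: add a counterfactual copy of every endogenous node (including $S^*$), each copy sharing the exogenous parent of its original and with the same edges among copies, and remove edges into the counterfactual treatment $X^*$; $Y^*_{X^*}$ is the counterfactual outcome, with $P(Y^*_{X^*=x}=y)=P(Y=y\mid do(X=x))$. Natural experimental s-recoverability: for every experimental distribution compatible with $G_s$, $P(Y^*_{X^*}\mid S=1)=P(Y^*_{X^*})>0$. *)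

(* Defs.v *)
From HB Require Import structures.
From mathcomp Require Import all_boot all_order all_algebra.
Set Implicit Arguments. Unset Strict Implicit. Unset Printing Implicit Defensive.
Import Order.TTheory GRing.Theory Num.Theory.
Local Open Scope ring_scope.

(* A directed graph on the node type N is an edge relation E (E v w: edge v -> w).
   Acyclic: no edge v -> w with a directed path back from w to v. *)
Definition acyclic (N : finType) (E : rel N) : Prop :=
  forall v w, E v w -> ~~ connect E w v.

(* Selection-augmented causal DAG G_s with treatment X, outcome Y and selection
   node S: a DAG in which X, Y, S are distinct and S is the (sink) selection node,
   i.e. it only receives edges (from the variables influencing inclusion). *)
Definition sel_graph (N : finType) (E : rel N) (X Y S : N) : Prop :=
  [/\ acyclic E, uniq [:: X; Y; S] & forall v, ~~ E S v].

(* A model: every endogenous node v has its own exogenous variable U_v with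
   values in U, distributed according to pU v (mutually independent), and a
   mechanism  f v : (values of endogenous nodes) -> U_v -> value of v.
   All endogenous values live in D; S is binary with values s0 (S=0), s1 (S=1). *)
Definition compatible (N : finType) (E : rel N) (S : N) (R : numDomainType)
    (U D : finType) (s0 s1 : D) (pU : N -> U -> R)
    (f : N -> (N -> D) -> U -> D) : Prop :=
  [/\ forall v u, 0 <= pU v u,
      forall v, \sum_(u : U) pU v u = 1,
      forall v (g h : N -> D) u, (forall w, E w v -> g w = h w) -> f v g u = f v h u
    & forall g u, f S g u \in [:: s0; s1]].

Definition weight (N U : finType) (R : numDomainType) (pU : N -> U -> R)
    (u : {ffun N -> U}) : R :=
  \prod_(v : N) pU v (u v).

Definition solves (N U D : finType) (f : N -> (N -> D) -> U -> D)
    (u : {ffun N -> U}) (val : {ffun N -> D}) : bool :=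
  [forall v, val v == f v (fun w => val w) (u v)].

(* counterfactual copy in the twin network: same exogenous u, edges into X*
   removed and X* set to x *)
Definition solves_do (N U D : finType) (f : N -> (N -> D) -> U -> D) (X : N) (x : D)
    (u : {ffun N -> U}) (valc : {ffun N -> D}) : bool :=
  (valc X == x) && [forall v, (v != X) ==> (valc v == f v (fun w => valc w) (u v))].

Definition Ptwin (N U D : finType) (R : numDomainType) (pU : N -> U -> R)
    (f : N -> (N -> D) -> U -> D) (X : N) (x : D)
    (A : {ffun N -> D} -> {ffun N -> D} -> bool) : R :=
  \sum_(u : {ffun N -> U}) weight pU u *
    (if [exists val : {ffun N -> D}, exists valc : {ffun N -> D},
           [&& solves f u val, solves_do f X x u valc & A val valc]]
     then 1 else 0).

Definition PS1 (N U D : finType) (R : numDomainType) (pU : N -> U -> R)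
    (f : N -> (N -> D) -> U -> D) (S : N) (s1 : D) : R :=
  \sum_(u : {ffun N -> U}) weight pU u *
    (if [exists val : {ffun N -> D}, solves f u val && (val S == s1)] then 1 else 0).

Definition PYcf (N U D : finType) (R : numDomainType) (pU : N -> U -> R)
    (f : N -> (N -> D) -> U -> D) (X Y : N) (x y : D) : R :=
  Ptwin pU f X x (fun _ valc => valc Y == y).

Definition PYcf_sel (N U D : finType) (R : numFieldType) (pU : N -> U -> R)
    (f : N -> (N -> D) -> U -> D) (X Y S : N) (x y s1 : D) : R :=
  Ptwin pU f X x (fun val valc => (valc Y == y) && (val S == s1)) / PS1 pU f S s1.

Definition nat_exp_s_recoverable (R : numFieldType) (N : finType) (E : rel N)
    (X Y S : N) : Prop :=
  forall (U D : finType) (s0 s1 : D) (pU : N -> U -> R) (f : N -> (N -> D) -> U -> D),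
    s0 != s1 ->
    compatible E S s0 s1 pU f ->
    0 < PS1 pU f S s1 ->
    (forall x y, 0 < PYcf pU f X Y x y) ->
    forall x y, PYcf_sel pU f X Y S x y s1 = PYcf pU f X Y x y.

(* Main.v *)
Require Import Defs.
From HB Require Import structures.
From mathcomp Require Import all_boot all_order all_algebra.
From mathcomp Require Import lra.
Set Implicit Arguments. Unset Strict Implicit. Unset Printing Implicit Defensive.
Import Order.TTheory GRing.Theory Num.Theory.
Local Open Scope ring_scope.
Section G.
Variable (N : finType) (E : rel N).
Local Open Scope nat_scope.

Lemma connect_last (e : rel N) a b : connect e a b -> a != b ->
  exists p, connect e a p && e p b.
Proof.
move=> /connectP [s] + ->; case/lastP: s => [|s p] /=; first by rewrite eqxx.
rewrite rcons_path last_rcons => /andP [ps ep] _.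
by exists (last a s); rewrite ep andbT; apply/connectP; exists s.
Qed.

Definition Eb (B : pred N) := [rel a b | E a b && ~~ B b].

Definition sol (B : pred N) (src : pred N) : {ffun N -> bool} :=
  [ffun v => [exists w, src w && connect (Eb B) w v]].

Lemma sol_in (B src : pred N) v : B v -> (forall w, src w -> B w) -> sol B src v = src v.
Proof.
move=> Bv hs; rewrite ffunE; apply/existsP/idP => [[w /andP [sw cw]]|sv].
  have [<-//|nwv] := eqVneq w v.
  by have [p /andP [_ /andP [_]]] := connect_last cw nwv; rewrite Bv.
by exists v; rewrite sv connect0.
Qed.

Lemma sol_out (B src : pred N) v : ~~ B v -> (forall w, src w -> B w) ->
  sol B src v = [exists w, E w v && sol B src w].
Proof.
move=> Bv hs; apply/idP/existsP => [|[p /andP [Epv]]]; rewrite !ffunE.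
  case/existsP => w /andP [sw cw].
  have nwv : w != v by apply/eqP => ewv; move: Bv; rewrite -ewv hs.
  have [p /andP [cp /andP [Epv _]]] := connect_last cw nwv.
  by exists p; rewrite Epv ffunE; apply/existsP; exists w; rewrite sw.
case/existsP => w /andP [sw cw]; apply/existsP; exists w; rewrite sw /=.
by apply: connect_trans cw (connect1 _) => /=; rewrite Epv.
Qed.

Lemma connect_Eb Y v : connect E Y v -> connect (Eb (pred1 Y)) Y v.
Proof.
move=> /connectP [s ps ->].
suff: forall x, connect (Eb (pred1 Y)) Y x -> path E x s ->
  connect (Eb (pred1 Y)) Y (last x s) by move=> H; apply: H ps; apply: connect0.
elim: s {ps} => [//|a s IH] x cx /= /andP [Exa pa]; apply: IH pa.
have [->|nay] := eqVneq a Y; first exact: connect0.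
by apply: connect_trans cx (connect1 _); rewrite /= Exa nay.
Qed.

Lemma uniq_anc (val : N -> bool) (Y : N) (b : bool) : acyclic E ->
  val Y = b ->
  (forall v, v != Y -> val v = [exists w, E w v && val w]) ->
  forall v, val v -> b.
Proof.
move=> acy vY hv.
suff H: forall n v, #|[set w | connect E w v]| < n -> val v -> b.
  by move=> v; apply: (H _ v (ltnSn _)).
elim=> [//|n IH] v; rewrite ltnS => hc.
have [->|nvY] := eqVneq v Y; first by rewrite vY.
rewrite hv // => /existsP [w /andP [Ewv vw]]; apply: (IH w) vw.
apply: leq_trans hc; apply: proper_card; apply/properP; split.
  apply/subsetP => z; rewrite !inE => czw.
  by apply: connect_trans czw (connect1 Ewv).
exists v; rewrite !inE ?connect0 //; exact: acy.
Qed.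
End G.
Lemma sumY (R : realFieldType) (N : finType) (Y : N) (b : bool) :
  \sum_(u : {ffun N -> bool}) weight (fun (_ : N) (_ : bool) => (1/2 : R)) u *
     (if u Y == b then 1 else 0) = 1/2.
Proof.
pose G (v : N) (t : bool) : R :=
  1/2 * (if v == Y then (if t == b then 1 else 0) else 1).
transitivity (\prod_(v : N) \sum_(t : bool) G v t); last first.
  rewrite (bigD1 Y) //=.
  rewrite [X in _ * X = _](_ : _ = 1); last first.
    apply: big1 => v nvY; rewrite big_bool /G (negbTE nvY).
    rewrite !mulr1; change (1/2 + 1/2 = 1 :> R); lra.
  rewrite big_bool.
  rewrite mulr1; change (G Y true + G Y false = 1/2); rewrite /G eqxx; clear G.
  by case: b; rewrite /= mulr1 mulr0 ?addr0 ?add0r ?mulr1.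
rewrite bigA_distr_bigA; apply: eq_bigr => u _.
rewrite /weight /G [RHS]big_split /=; congr (_ * _).
rewrite (bigD1 Y) //= eqxx big1 ?mulr1 // => v nvY; by rewrite (negbTE nvY).
Qed.

Theorem lemma3 (R : realFieldType) (N : finType) (E : rel N) (X Y S : N) :
  sel_graph E X Y S ->
  nat_exp_s_recoverable R E X Y S ->
  (* no direct path Y -> S and no (indirect) directed path from Y to S *)
  ~~ E Y S /\ ~~ connect E Y S.
Proof.
move=> [acy uq Ssink] hrec.
have cYS : ~~ connect E Y S.
  apply/negP => C.
  move: uq; rewrite /= !inE negb_or => /and3P [/andP [nXY nXS] nYS _].
  have nYX : Y != X by rewrite eq_sym.
  pose f := fun (v : N) (g : N -> bool) (u : bool) =>
    if v == Y then u else [exists w, E w v && g w].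
  pose pU := fun (_ : N) (_ : bool) => (1/2 : R).
  pose val0 (u : {ffun N -> bool}) := sol E (pred1 Y) (fun w => (w == Y) && u Y).
  pose valc0 (u : {ffun N -> bool}) (x : bool) :=
    sol E [pred w | (w == Y) || (w == X)] (fun w => ((w == Y) && u Y) || ((w == X) && x)).
  have solves0 u : solves f u (val0 u).
    apply/forallP => v; apply/eqP; rewrite /f; case: eqP => [->|/eqP nvY].
      by rewrite sol_in /= ?eqxx // => w /andP [].
    by rewrite sol_out // => w /andP [].
  have solvesdo0 u x : solves_do f X x u (valc0 u x).
    have hsrc : forall w, ((w == Y) && u Y) || ((w == X) && x) -> (w == Y) || (w == X).
      by move=> w /orP [/andP [-> _]|/andP [-> _]] //; rewrite orbT.
    apply/andP; split.
      by rewrite sol_in //= ?eqxx ?orbT // (negbTE nXY).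
    apply/forallP => v; apply/implyP => nvX; apply/eqP; rewrite /f.
    case: eqP => [->|/eqP nvY].
      by rewrite sol_in //= ?eqxx ?(negbTE nYX) ?orbF.
    by rewrite sol_out //= negb_or nvY.
  have cfY u x (valc : {ffun N -> bool}) : solves_do f X x u valc -> valc Y = u Y.
    by case/andP => _ /forallP /(_ Y); rewrite nYX /= /f eqxx => /eqP.
  have fS u (val : {ffun N -> bool}) : solves f u val -> val S -> u Y.
    move=> /forallP hs; apply: (uniq_anc (val := val) (Y := Y) acy).
      by move: (hs Y); rewrite /f eqxx => /eqP.
    by move=> v nvY; move: (hs v); rewrite /f (negbTE nvY) => /eqP.
  have val0S (u : {ffun N -> bool}) : u Y -> val0 u S.
    move=> uY; rewrite ffunE; apply/existsP; exists Y; rewrite eqxx uY /=.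
    exact: connect_Eb.
  have cPS1 (u : {ffun N -> bool}) : [exists val, solves f u val && (val S == true)] = (u Y == true).
    apply/existsP/idP => [[val /andP [sv /eqP vS]]|/eqP uY].
      by rewrite (fS u val sv) ?vS.
    by exists (val0 u); rewrite solves0 val0S ?uY.
  have cPY (u : {ffun N -> bool}) x y : [exists val, exists valc,
      [&& solves f u val, solves_do f X x u valc & valc Y == y]] = (u Y == y).
    apply/existsP/idP => [[val /existsP [valc /and3P [_ sd /eqP <-]]]|/eqP uY].
      by rewrite (cfY _ _ _ sd).
    exists (val0 u); apply/existsP; exists (valc0 u x).
    by rewrite solves0 solvesdo0 (cfY _ _ _ (solvesdo0 u x)) uY eqxx.
  have cSel (u : {ffun N -> bool}) x : [exists val, exists valc,
      [&& solves f u val, solves_do f X x u valc & (valc Y == true) && (val S == true)]]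
      = (u Y == true).
    apply/existsP/idP => [[val /existsP [valc /and3P [_ sd /andP [/eqP <- _]]]]|/eqP uY].
      by rewrite (cfY _ _ _ sd).
    exists (val0 u); apply/existsP; exists (valc0 u x).
    by rewrite solves0 solvesdo0 (cfY _ _ _ (solvesdo0 u x)) uY val0S ?uY.
  have ePS1 : PS1 pU f S true = 1/2.
    rewrite /PS1 -(sumY R Y true); apply: eq_bigr => u _.
    by rewrite cPS1.
  have ePY x y : PYcf pU f X Y x y = 1/2.
    rewrite /PYcf /Ptwin -(sumY R Y y); apply: eq_bigr => u _.
    by rewrite cPY.
  have eSel : Ptwin pU f X true (fun val valc => (valc Y == true) && (val S == true)) = 1/2.
    rewrite /Ptwin -(sumY R Y true); apply: eq_bigr => u _.
    by rewrite cSel.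
  have comp : compatible E S false true pU f.
    split.
    - by move=> v u; rewrite /pU; lra.
    - by move=> v; rewrite big_bool; change (1/2 + 1/2 = 1 :> R); lra.
    - move=> v g h u hgh; rewrite /f; case: (v == Y) => //.
      by apply: eq_existsb => w; case Ew: (E w v) => //=; rewrite hgh.
    - by move=> g u; case: (f S g u).
  have := hrec bool bool false true pU f isT comp _ _ true true.
  rewrite /PYcf_sel eSel ePS1 ePY => H.
  have H1 : (0:R) < 1/2 by lra.
  have H2 : forall x y, (0:R) < PYcf pU f X Y x y by move=> x y; rewrite ePY; lra.
  move: (H H1 H2); rewrite divff; lra.
split=> //; apply: contra cYS; exact: connect1.
Qed.
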